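(* Assume the following setting: $\mathcal{F}$ is a nonempty family of graphs with $\chi(\mathcal{F})=r+1\ge 3$; $0<\varepsilon<\frac12$, $0<\sigma<\frac{\varepsilon^3}{7}$, $0\le\alpha\le 1-\frac1r-\varepsilon$; $\mathcal{G}'_n$ is the set of $\mathcal{F}$-free $n$-vertex graphs with minimum degree larger than $(\pi(\mathcal{F})-\varepsilon)n$; and there is $N$ such that for all $n>N$, $|\mathrm{ex}(n,\mathcal{F})-\mathrm{ex}(n-1,\mathcal{F})-\pi(\mathcal{F})n|\le\sigma n$ and $|\lambda_\alpha(\mathcal{G}'_n)-2\mathrm{ex}(n,\mathcal{F})/n|\le\sigma$. Let $G$ be an $\mathcal{F}$-free graph on $n$ vertices with minimum degree $\delta$, let $\mathbf{x}=(x_1,\dots,x_n)$ be a non-negative unit eigenvector of $A_\alpha(G)$ corresponding to $\lambda_\alpha(G)$, and $x=\min\{x_1,\dots,x_n\}$. If $\lambda_{\alpha}(G)\geq \lambda_{\alpha}(\mathcal{G}'_{n})$ and $\delta\leq (\pi (\mathcal{F})-\varepsilon)n$, then for all sufficiently large $n$, $$x^2<\frac{1-\varepsilon^2}{n}.$$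
   Context: $\lambda_\alpha(G)$ is the largest eigenvalue of $A_\alpha(G)=\alpha D(G)+(1-\alpha)A(G)$ ($A$ adjacency matrix, $D$ diagonal degree matrix); $\lambda_\alpha(\mathcal{G}'_n)=\max_{H\in\mathcal{G}'_n}\lambda_\alpha(H)$. $\chi(\mathcal{F})=\min_{F\in\mathcal{F}}\chi(F)$. $\mathrm{ex}(n,\mathcal{F})$ is the maximum number of edges of an $\mathcal{F}$-free $n$-vertex graph, and $\pi(\mathcal{F})=\lim_{n\to\infty}\mathrm{ex}(n,\mathcal{F})/\binom n2$. *)

(* Defs.v *)
From HB Require Import structures.
From mathcomp Require Import all_boot all_order all_algebra.
From mathcomp Require Import all_classical all_reals all_analysis.
Set Implicit Arguments. Unset Strict Implicit. Unset Printing Implicit Defensive.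
Import Order.TTheory GRing.Theory Num.Theory numFieldNormedType.Exports.
Local Open Scope classical_set_scope.
Local Open Scope ring_scope.

Record graph (n : nat) := Graph {
  gadj : rel 'I_n;
  gsym : symmetric gadj;
  girr : irreflexive gadj }.

Definition gfamily := forall k : nat, graph k -> Prop.

Definition contains n k (G : graph n) (H : graph k) : Prop :=
  exists f : 'I_k -> 'I_n, injective f /\
    forall u v, gadj H u v -> gadj G (f u) (f v).

Definition Ffree (F : gfamily) n (G : graph n) : Prop :=
  forall k (H : graph k), F k H -> ~ contains G H.

Definition colorable k (H : graph k) (c : nat) : Prop :=
  exists f : 'I_k -> 'I_c, forall u v, gadj H u v -> f u != f v.

Definition family_chi (F : gfamily) (c : nat) : Prop :=
  (exists k (H : graph k), F k H /\ colorable H c) /\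
  (forall k (H : graph k), F k H -> ~ colorable H c.-1).

Definition deg n (G : graph n) (i : 'I_n) : nat := #|[set j | gadj G i j]|.

(* minimum degree (for n >= 1; the index n is never attained) *)
Definition mindeg n (G : graph n) : nat := \big[minn/n]_(i < n) deg G i.

Definition nedges n (G : graph n) : nat :=
  #|[set p : 'I_n * 'I_n | (p.1 < p.2)%N && gadj G p.1 p.2]|.

Definition exF (R : realType) (F : gfamily) (n : nat) : R :=
  sup [set (nedges G)%:R | G in [set G : graph n | Ffree F G]].

Definition pi_fam (R : realType) (F : gfamily) : R :=
  limn (fun n : nat => exF R F n / ('C(n, 2))%:R).

Definition Aalpha (R : realType) (alpha : R) n (G : graph n) : 'M[R]_n :=
  \matrix_(i, j) (alpha * ((i == j)%:R * (deg G i)%:R)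
                  + (1 - alpha) * (gadj G i j)%:R).

Definition lambda_alpha (R : realType) (alpha : R) n (G : graph n) : R :=
  sup [set a : R | eigenvalue (Aalpha alpha G) a].

Definition Gprime (R : realType) (F : gfamily) (eps : R) (n : nat) : set (graph n) :=
  [set H : graph n | Ffree F H /\ (pi_fam R F - eps) * n%:R < (mindeg H)%:R].

Definition lambda_fam (R : realType) (alpha : R) (F : gfamily) (eps : R) (n : nat) : R :=
  sup [set lambda_alpha alpha H | H in @Gprime R F eps n].

Definition vmin (R : realType) n (x : 'cV[R]_n) : R := inf (range (fun i => x i 0)).

(* Main.v *)
Require Import Defs.
From HB Require Import structures.
From mathcomp Require Import all_boot all_order all_algebra.
From mathcomp Require Import all_classical all_reals all_analysis.
Import Order.TTheory GRing.Theory Num.Theory numFieldNormedType.Exports.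
Local Open Scope classical_set_scope.
Local Open Scope ring_scope.

Lemma key (R: realFieldType) (n d D b m Q S xu eps E : R) :
  0 < n -> 0 <= d -> 0 < b -> b <= 1 -> 0 < eps -> eps * 2 < 1 -> 0 < E ->
  eps * n <= E + E ->
  b*d + E <= D -> D*xu = b*S -> S^+2 <= d*Q -> Q <= 1 - (n-d)* m^+2 ->
  0 <= m -> m <= xu -> m^+2 < (1-eps^+2)/n.
Proof.
move=> n0 d0 b0 b1 e0 e1 E0 hE hD hDx hS hQ m0 mx.
set P := b*d.
have P0 : 0 <= P by apply: mulr_ge0 => //; apply: ltW.
have PE0 : 0 < P + E by apply: ltr_wpDl.
have D0 : 0 < D by apply: lt_le_trans hD.
set t := m^+2.
have t0 : 0 <= t by apply: sqr_ge0.
have h1 : D^+2 * t <= b * P - b * P * (n-d) * t.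
  have hDm : D * m <= D * xu by apply: ler_wpM2l => //; apply: ltW.
  have Dm0 : 0 <= D * m by apply: mulr_ge0 => //; apply: ltW.
  have : (D * m)^+2 <= (D * xu)^+2 by rewrite !expr2; apply: ler_pM.
  rewrite hDx !exprMn => h2.
  apply: (le_trans h2).
  have -> : b * P - b * P * (n-d) * t = b^+2 * (d * (1 - (n-d) * t)).
    by rewrite (mulrBr d) mulr1 (mulrBr (b^+2)) /P (expr2 b) !mulrA.
  apply: ler_wpM2l; first exact: sqr_ge0.
  apply: (le_trans hS); exact: ler_wpM2l.
have hT : (D^+2 + b * P * (n-d)) * t <= b * P.
  by rewrite mulrDl -lerBrDr.
have hT' : P * (eps * n) + E^+2 + b * P * n <= D^+2 + b * P * (n-d).
  have hsq : (P + E)^+2 <= D^+2 by rewrite !expr2; apply: ler_pM => //; apply: ltW.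
  have sq : P^+2 + P*(eps*n) + E^+2 <= D^+2.
    apply: le_trans hsq; rewrite sqrrD mulr2n -(mulrDr P E E) lerD2r lerD2l; exact: ler_wpM2l.
  have -> : b * P * (n - d) = b * P * n - P^+2.
    rewrite mulrBr; congr (_ - _).
    by rewrite expr2 /P -!mulrA; congr (b * _); rewrite mulrCA.
  rewrite addrCA addrC; apply: lerD => //.
  by rewrite lerBrDl addrA.
have E2 : 0 < E^+2 by apply: exprn_gt0.
have T'0 : 0 < P * (eps * n) + E^+2 + b * P * n.
  rewrite -addrA; apply: ltr_wpDl; first by apply: mulr_ge0 => //; apply: mulr_ge0; apply: ltW.
  by apply: ltr_wpDr => //; apply: mulr_ge0; [apply: mulr_ge0; [exact: ltW b0|exact: P0]|exact: ltW n0].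
rewrite ltr_pdivlMr // ltNge; apply/negP => hc.
set K := 1 - eps^+2 in hc.
set T' := P * (eps * n) + E^+2 + b * P * n in hT' T'0.
set T := D^+2 + b * P * (n-d) in hT hT'.
have tn0 : 0 <= t * n by apply: mulr_ge0 => //; apply: ltW.
have c1 : K * T' <= n * (b * P).
  apply: (le_trans (ler_wpM2r (ltW T'0) hc)).
  apply: (le_trans (ler_wpM2l tn0 hT')).
  by rewrite -mulrA mulrCA [t * T]mulrC; apply: ler_wpM2l => //; exact: ltW n0.
have epsle1 : eps <= 1 by apply: ltW; apply: le_lt_trans e1; rewrite ler_peMr //; [apply: ltW| rewrite ler1n].
have epsK : eps <= K.
  rewrite /K lerBrDr.
  apply: ltW; apply: le_lt_trans e1.
  rewrite mulr_natr mulr2n addrC; apply: lerD => //.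
  by rewrite expr2; apply: ler_piMr => //; apply: ltW.
have c2 : eps^+2 * (b * P * n) <= K * (P * (eps * n)).
  have -> : eps^+2 * (b*P*n) = (eps^+2*b) * (P*n) by rewrite -!mulrA.
  have -> : K*(P*(eps*n)) = (K*eps)*(P*n). by rewrite -!mulrA; congr (K * _); rewrite [RHS]mulrCA; congr (b * _); rewrite [RHS]mulrCA.
  apply: ler_wpM2r; first by apply: mulr_ge0 => //; apply: ltW.
  apply: (@le_trans _ _ (eps^+2)); first by apply: ler_piMr => //; exact: sqr_ge0.
  by rewrite expr2 ler_wpM2r //; apply: ltW.
have K0 : 0 < K by apply: lt_le_trans epsK.
have c3 : 0 < K * E^+2 by apply: mulr_gt0.
have eK : K*(b*P*n) = b*P*n - eps^+2*(b*P*n) by rewrite /K mulrBl mul1r.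
have eq : K*T' = (K*(P*(eps*n)) - eps^+2*(b*P*n)) + K*E^+2 + b*P*n.
  rewrite /T' !mulrDr eK -!addrA; congr (_ + _); rewrite [RHS]addrCA; congr (_ + _); exact: addrC.
have : n * (b * P) < K * T'.
  rewrite eq mulrC addrC ltrDl.
  apply: ltr_wpDl => //.
  by rewrite subr_ge0.
by rewrite ltNge c1.
Qed.

Lemma CS (R : realFieldType) n (w y : 'I_n -> R) : (forall j, 0 <= w j) ->
  (\sum_j w j * y j)^+2 <= (\sum_j w j) * (\sum_j w j * y j ^+ 2).
Proof.
move=> w0.
have A0 : 0 <= \sum_j w j by apply: sumr_ge0.
move: A0; rewrite le_eqVlt => /orP [/eqP A0'|Apos].
  have wz : forall j, w j = 0.
    move=> j; move: A0' => /esym /psumr_eq0P h; exact: h.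
  rewrite -A0' mul0r big1 ?expr0n // => j _; by rewrite wz mul0r.
set A := \sum_j w j; set B := \sum_j w j * y j; set C := \sum_j w j * y j ^+ 2.
have key : forall l, (l * B) *+ 2 <= C + l^+2 * A.
  move=> l.
  have : 0 <= \sum_j w j * (y j - l)^+2.
    by apply: sumr_ge0 => j _; apply: mulr_ge0 => //; exact: sqr_ge0.
  have -> : \sum_j w j * (y j - l)^+2 = C - (l * B) *+ 2 + l^+2 * A.
    rewrite /C /B /A mulr_sumr -sumrMnl mulr_sumr -sumrB -big_split /=.
    apply: eq_bigr => j _.
    rewrite sqrrB mulrDr mulrBr mulrnAr (mulrA (w j) (y j) l) [w j * y j * l]mulrC [w j * l^+2]mulrC //.
  by rewrite addrAC subr_ge0.
have := key (B / A).
have An0 : A != 0 by rewrite gt_eqF.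
rewrite (expr2 (B/A)) -(mulrA (B/A)) divfK // mulr2n lerD2r mulrAC ler_pdivrMr // -expr2 mulrC //.
Qed.

Lemma lowerb (R : realFieldType) (f : nat -> R) (p : R) N :
  (forall n, (N < n)%N -> p * n%:R <= f n - f n.-1) ->
  forall k, f N + f N - p * (N%:R * (N%:R + 1)) <=
            f (N + k)%N + f (N + k)%N - p * ((N + k)%:R * ((N + k)%:R + 1)).
Proof.
move=> hf; elim=> [|k IH]; first by rewrite addn0.
apply: (le_trans IH).
have h := hf (N + k.+1)%N.
rewrite addnS ltnS leq_addr /= in h; have {}h := h isT.
rewrite addnS.
set K := (N + k)%:R.
have eS : (N + k).+1%:R = K + 1 :> R by rewrite -addn1 natrD.
rewrite eS in h *.
set a := f (N + k)%N in h *; set b := f (N + k).+1 in h *.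
have e2 : p * ((K + 1) * (K + 1 + 1)) = p * (K * (K + 1)) + (p * (K + 1) + p * (K + 1)).
  rewrite -!mulrDr; congr (p * _); rewrite mulrDr mulr1 mulrDl mul1r. by rewrite [RHS]addrA.
rewrite e2 opprD addrA [X in _ <= X]addrAC lerD2r lerBrDr addrACA.
by apply: lerD; rewrite -lerBrDl.
Qed.

Lemma vmin_prop (R : realType) n (x : 'cV[R]_n) : (0 < n)%N ->
  (forall i, 0 <= x i 0) -> 0 <= vmin x /\ forall i, vmin x <= x i 0.
Proof.
move=> n0 xp; split.
  apply: lb_le_inf; first by exists (x (Ordinal n0) 0); exists (Ordinal n0).
  by move=> z [i _ <-].
move=> i; apply: (ge_inf (E := range (fun i => x i 0))).
  by exists 0 => z [j _ <-].
by exists i.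
Qed.

Lemma mindeg_ex n (G : graph n) : (0 < n)%N -> exists u, (deg G u <= mindeg G)%N.
Proof.
move=> n0; rewrite /mindeg.
apply: (big_ind (fun y => exists u, (deg G u <= y)%N)).
- exists (Ordinal n0); rewrite /deg; apply: leq_trans (max_card _) _; by rewrite card_ord.
- move=> a b [u hu] [v hv]; case: (leqP a b) => hab.
    by exists u.
  by exists v.
- by move=> i _; exists i.
Qed.

Lemma deg_sum (R : realType) n (G : graph n) u :
  (deg G u)%:R = \sum_j ((gadj G u j)%:R : R).
Proof.
rewrite /deg -sum1_card natr_sum big_mkcond /=; apply: eq_bigr => j _.
by rewrite /in_mem /= /in_set asboolb; case: gadj.
Qed.

Theorem lemma5p4 (R : realType) (F : gfamily) (r : nat) (eps sigma alpha : R) :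
  (exists k (H : graph k), F k H) ->
  family_chi F r.+1 -> (3 <= r.+1)%N ->
  0 < eps -> eps < 1 / 2 ->
  0 < sigma -> sigma < eps ^+ 3 / 7 ->
  0 <= alpha -> alpha <= 1 - 1 / r%:R - eps ->
  (exists N : nat, forall n : nat, (N < n)%N ->
      `|exF R F n - exF R F n.-1 - pi_fam R F * n%:R| <= sigma * n%:R /\
      `|lambda_fam alpha F eps n - 2 * exF R F n / n%:R| <= sigma) ->
  exists N0 : nat, forall n : nat, (N0 < n)%N ->
    forall (G : graph n) (x : 'cV[R]_n),
      (forall i, 0 <= x i 0) ->
      \sum_(i < n) x i 0 ^+ 2 = 1 ->
      Aalpha alpha G *m x = lambda_alpha alpha G *: x ->
      lambda_fam alpha F eps n <= lambda_alpha alpha G ->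
      ((mindeg G)%:R <= (pi_fam R F - eps) * n%:R) ->
      Ffree F G ->
      vmin x ^+ 2 < (1 - eps ^+ 2) / n%:R.
Proof.
move=> _ _ _ e0 e1 s0 s1 a0 a1 [N hN].
set pi := pi_fam R F.
set f := exF R F.
set p := pi - sigma.
have hf : forall n, (N < n)%N -> p * n%:R <= f n - f n.-1.
  move=> n /hN [+ _]; rewrite ler_norml => /andP [h _].
  rewrite lerBrDr addrC in h; by rewrite /p mulrBl.
set g := f N + f N - p * (N%:R * (N%:R + 1)).
set M := `|g| + `|p| + sigma.
have eps1 : eps <= 1.
  apply: ltW; apply: (lt_le_trans e1); rewrite ler_pdivrMr // mul1r ler1n //.
have es : 0 < eps - sigma * 2.
  rewrite subr_gt0; rewrite ltr_pdivlMr // in s1.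
  have h7 : sigma * 7%:R < eps.
    apply: (lt_le_trans s1); rewrite exprS; apply: ler_piMr; first exact: ltW.
    by rewrite expr2; apply: mulr_ile1 => //; apply: ltW.
  apply: le_lt_trans h7; apply: ler_wpM2l; [exact: ltW | by rewrite ler_nat].
have M0 : 0 <= M by rewrite /M; apply: addr_ge0; [apply: addr_ge0|apply: ltW].
have Mpos : 0 <= (M + M) / (eps - sigma * 2).
  by apply: divr_ge0; [apply: addr_ge0|apply: ltW].
set N1 := Num.Def.archi_bound ((M + M) / (eps - sigma * 2)).
have hN1 := archi_boundP Mpos.
exists (maxn N N1) => n; rewrite gtn_max => /andP [nN nN1] G x x0 x1 hx hlam hmin _.
have n0 : (0 < n)%N by apply: leq_ltn_trans nN.
have nR : 0 < n%:R :> R by rewrite ltr0n.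
have hMn : M + M < n%:R * (eps - sigma * 2).
  rewrite -ltr_pdivrMr //; apply: (lt_trans hN1); by rewrite ltr_nat.
set lam := lambda_alpha alpha G in hx hlam.
have lamLB : p * n%:R - M <= lam.
  have [_ hl] := hN n nN.
  have h2 : 2 * f n / n%:R - sigma <= lam.
    apply: le_trans hlam; rewrite lerBlDr -lerBlDl.
    by move: hl; rewrite distrC ler_norml => /andP [].
  apply: le_trans h2.
  have hg := @lowerb R f p N hf (n - N).
  rewrite subnKC in hg; last exact: ltnW.
  have nn0 : n%:R != 0 :> R by rewrite gt_eqF.
  rewrite /M opprD addrA lerD2r.
  have h3 : (g + p * (n%:R * (n%:R + 1))) / n%:R <= 2 * f n / n%:R.
    apply: ler_wpM2r; first by rewrite invr_ge0 ltW.
    by rewrite -lerBrDr mulr_natl mulr2n.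
  apply: le_trans h3.
  rewrite (mulrCA p) (mulrDl g) (mulrC n%:R (p * (n%:R + 1))) mulfK // (mulrDr p) mulr1 opprD addrCA.
  apply: lerD.
    apply: lerNnormlW.
    rewrite normf_div (ger0_norm (ltW nR)) ler_pdivrMr // ler_peMr //; last by rewrite ler1n.
  by rewrite lerD2l; apply: lerNnormlW.
have [u hu] := @mindeg_ex n G n0.
set d := (deg G u)%:R : R.
have d0 : 0 <= d by rewrite /d ler0n.
have dUB : d <= (pi - eps) * n%:R by apply: le_trans hmin; rewrite /d ler_nat.
set b := 1 - alpha.
have b0 : 0 < b.
  rewrite /b subr_gt0; apply: (le_lt_trans a1).
  rewrite ltrBlDr; apply: (@le_lt_trans _ _ 1); last by rewrite ltrDl.
  by rewrite gerBl divr_ge0.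
have b1 : b <= 1 by rewrite /b gerBl.
have e2 : eps * 2 < 1 by rewrite ltr_pdivlMr in e1.
set E := lam - d.
have hE : eps * n%:R <= E + E.
  have hX : p * n%:R - M - (pi - eps) * n%:R <= E by apply: lerB.
  rewrite addrAC -mulrBl /p opprB [X in X * _]addrC [X in X * _]addrA subrK in hX.
  apply: le_trans (lerD hX hX).
  rewrite addrACA -opprD lerBrDr.
  apply: (le_trans (_ : _ <= eps * n%:R + n%:R * (eps - sigma * 2))).
    by rewrite lerD2l; apply: ltW.
  rewrite (mulrC n%:R) -!mulrDl; apply: ler_wpM2r; first exact: ltW.
  by rewrite mulr_natr mulr2n opprD addrA addrACA.
have E0 : 0 < E.
  rewrite ltNge; apply/negP => hE0.
  have := lerD hE0 hE0; rewrite addr0 => h.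
  have := le_trans hE h; rewrite leNgt => /negP; apply; exact: mulr_gt0.
set D := lam - alpha * d.
have hD : b * d + E <= D.
  by rewrite /b /D /E mulrBl mul1r addrC addrA subrK.
set w := fun j => ((gadj G u j)%:R : R).
have w0 : forall j, 0 <= w j by move=> j; rewrite /w ler0n.
have w1 : forall j, 0 <= 1 - w j by move=> j; rewrite /w subr_ge0; case: gadj.
set S := \sum_j w j * x j 0.
set Q := \sum_j w j * x j 0 ^+ 2.
have hDx : D * x u 0 = b * S.
  have h : \sum_j Aalpha alpha G u j * x j 0 = lam * x u 0.
    by move: (congr1 (fun Z : 'cV[R]_n => Z u 0) hx); rewrite !mxE.
  rewrite (eq_bigr (fun j => alpha * ((u == j)%:R * d) * x j 0 + b * (w j * x j 0))) in h;
    last by move=> j _; rewrite /Aalpha mxE mulrDl (mulrA b).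
  rewrite big_split /= -mulr_sumr (bigD1 u) //= big1 ?addr0 in h; last first.
    by move=> j hj; rewrite eq_sym (negbTE hj) mul0r mulr0 mul0r.
  rewrite eqxx mul1r in h.
  by rewrite /D mulrBl -h addrC addrK.
have hS : S ^+ 2 <= d * Q.
  by have := @CS R n w (fun j => x j 0) w0; rewrite -/S -/Q /w -deg_sum.
have [m0 mle] := @vmin_prop R n x n0 x0.
have hQ : Q <= 1 - (n%:R - d) * vmin x ^+ 2.
  rewrite -[X in _ <= X - _]x1.
  have -> : \sum_(i < n) x i 0 ^+ 2 = Q + \sum_j (1 - w j) * x j 0 ^+ 2.
    rewrite /Q -big_split; apply: eq_bigr => j _ /=.
    by rewrite mulrBl mul1r addrC subrK.
  rewrite -addrA lerDl subr_ge0.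
  have -> : n%:R - d = \sum_j (1 - w j).
    by rewrite sumrB sumr_const card_ord /d deg_sum.
  rewrite mulr_suml; apply: ler_sum => j _; apply: ler_wpM2l => //.
  by rewrite !expr2; apply: ler_pM.
exact: (@key R _ _ _ _ _ _ _ _ _ _ nR d0 b0 b1 e0 e2 E0 hE hD hDx hS hQ m0 (mle u)).
Qed.
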